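(* Let $K_f, M, B, P_m, P_f, k_{22}>0$, $b_{22}>0$, $I_m, I_f\ge 0$, $B_f\ge 0$ and $0\le\alpha\le 1$ be real numbers, and put $\mu=I_m/P_m$, $\nu=I_f/P_f$. Consider the two-port with hybrid matrix $H(s)=\begin{bmatrix} h_{11}&h_{12}\\ h_{21}&h_{22}\end{bmatrix}$ where $$h_{11}(s)=\frac{B_fMs^4+\big(B_f(B+P_m)+K_fM\big)s^3+\big(B_fI_m+K_f(B+P_m)\big)s^2+K_fI_ms}{a_4s^4+a_3s^3+a_2s^2+a_1s+a_0},$$ $$h_{12}(s)=\frac{B_fP_mP_fs^3+P_mP_f\big(K_f+B_f(\mu+\nu)\big)s^2+\big(B_fI_mI_f+K_fP_mP_f(\mu+\nu)\big)s+K_fI_mI_f}{a_4s^4+a_3s^3+a_2s^2+a_1s+a_0},$$ $h_{21}(s)=-1$, $h_{22}(s)=\dfrac{s}{b_{22}s+k_{22}}$, with $a_4=M$, $a_3=B+P_m+B_f(\alpha+P_mP_f)$, $a_2=I_m+K_f(\alpha+P_mP_f)+B_fP_mP_f(\mu+\nu)$, $a_1=B_fI_mI_f+K_fP_mP_f(\mu+\nu)$, $a_0=K_fI_mI_f$. Suppose that: the $h$-parameters have no poles in the open right half plane; any poles of the $h$-parameters on the imaginary axis are simple with real positive residues; and $\mathrm{Re}\,h_{11}(j\omega)\ge 0$ for all real $\omega$. If this two-port is absolutely stable, then $B_f>0$.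
   Context: This models a series (damped) elastic actuator (actuator inertia $M$, actuator damping $B$, physical spring $K_f$ in parallel with physical damper $B_f$; $B_f=0$ is a pure series elastic actuator) under velocity-sourced impedance control with PI motion controller gains $P_m,I_m$, PI force controller gains $P_f,I_f$, feed-forward parameter $\alpha$, and a virtual coupler consisting of a spring $k_{22}$ in parallel with a damper $b_{22}$. The hybrid matrix relates $(F_{\mathrm{int}},v_e)^T=H\,(-v_h,F_e)^T$. A two-port with hybrid matrix $H$ is called absolutely stable if (Llewellyn's criterion): (a) the $h$-parameters have no poles in the open right half plane; (b) any poles of the $h$-parameters on the imaginary axis are simple with real positive residues; (c) for all real $\omega$ (away from imaginary-axis poles), (i) $\mathrm{Re}\,h_{11}(j\omega)\ge 0$ and (ii) $2\,\mathrm{Re}\,h_{11}(j\omega)\,\mathrm{Re}\,h_{22}(j\omega)-\mathrm{Re}\big(h_{12}(j\omega)h_{21}(j\omega)\big)-\big|h_{12}(j\omega)h_{21}(j\omega)\big|\ge 0$. *)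

(* Defs.v *)
From mathcomp Require Import all_boot all_order all_algebra.
From mathcomp Require Import complex.
From mathcomp Require Import reals.
From Stdlib Require Lists.List.
Set Implicit Arguments. Unset Strict Implicit. Unset Printing Implicit Defensive.
Import Order.TTheory GRing.Theory Num.Theory.
Local Open Scope ring_scope.

Section RatFun.
Variable R : realType.
Local Notation C := R[i].

Record ratfun := RatFun { rnum : {poly C}; rden : {poly C} }.

Definition linf (z : C) : {poly C} := 'X - z%:P.

(* z is a pole of f: after cancelling common factors (X - z), the
   denominator still vanishes at z, i.e. mult_z(den) > mult_z(num). *)
Definition rf_pole (f : ratfun) (z : C) : Prop :=
  rnum f != 0 /\ (mup z (rnum f) < mup z (rden f))%N.

Definition rf_simple_pole (f : ratfun) (z : C) : Prop :=
  rnum f != 0 /\ mup z (rden f) = (mup z (rnum f)).+1.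

(* Residue at a simple pole z:  f = (X-z)^m p1 / ((X-z)^(m+1) q1), res = p1(z)/q1(z). *)
Definition rf_res (f : ratfun) (z : C) : C :=
  (rnum f %/ linf z ^+ mup z (rnum f)).[z] / (rden f %/ linf z ^+ mup z (rden f)).[z].

(* Value at a non-pole z (continuous extension, removing removable singularities). *)
Definition rf_eval (f : ratfun) (z : C) : C :=
  (rnum f %/ linf z ^+ mup z (rden f)).[z] / (rden f %/ linf z ^+ mup z (rden f)).[z].

Definition jw (w : R) : C := Complex 0 w.

(* Llewellyn's absolute stability for a two-port with h-parameters h11 h12 h21 h22. *)
Definition hcond_a (h : seq ratfun) : Prop :=
  forall f, Stdlib.Lists.List.In f h -> forall z : C, 0 < 'Re z -> ~ rf_pole f z.

Definition hcond_b (h : seq ratfun) : Prop :=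
  forall f, Stdlib.Lists.List.In f h -> forall w : R, rf_pole f (jw w) ->
    rf_simple_pole f (jw w) /\ rf_res f (jw w) \is Num.real /\ 0 < rf_res f (jw w).

Definition away_from_poles (h : seq ratfun) (w : R) : Prop :=
  forall f, Stdlib.Lists.List.In f h -> ~ rf_pole f (jw w).

Definition hcond_ci (h11 : ratfun) (h : seq ratfun) : Prop :=
  forall w : R, away_from_poles h w -> 0 <= 'Re (rf_eval h11 (jw w)).

Definition hcond_cii (h11 h12 h21 h22 : ratfun) : Prop :=
  forall w : R, away_from_poles [:: h11; h12; h21; h22] w ->
    let p := rf_eval h12 (jw w) * rf_eval h21 (jw w) in
    0 <= 2 * 'Re (rf_eval h11 (jw w)) * 'Re (rf_eval h22 (jw w)) - 'Re p - `|p|.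

Definition absolutely_stable (h11 h12 h21 h22 : ratfun) : Prop :=
  let h := [:: h11; h12; h21; h22] in
  [/\ hcond_a h, hcond_b h, hcond_ci h11 h & hcond_cii h11 h12 h21 h22].

Definition cst (x : R) : {poly C} := (Complex x 0)%:P.

Definition sea_den (Kf M B Pm Pf Im If Bf alpha : R) : {poly C} :=
  let mu := Im / Pm in let nu := If / Pf in
  cst M * 'X^4
  + cst (B + Pm + Bf * (alpha + Pm * Pf)) * 'X^3
  + cst (Im + Kf * (alpha + Pm * Pf) + Bf * Pm * Pf * (mu + nu)) * 'X^2
  + cst (Bf * Im * If + Kf * Pm * Pf * (mu + nu)) * 'X
  + cst (Kf * Im * If).

Definition sea_h11 (Kf M B Pm Pf Im If Bf alpha : R) : ratfun :=
  RatFun (cst (Bf * M) * 'X^4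
          + cst (Bf * (B + Pm) + Kf * M) * 'X^3
          + cst (Bf * Im + Kf * (B + Pm)) * 'X^2
          + cst (Kf * Im) * 'X)
         (sea_den Kf M B Pm Pf Im If Bf alpha).

Definition sea_h12 (Kf M B Pm Pf Im If Bf alpha : R) : ratfun :=
  let mu := Im / Pm in let nu := If / Pf in
  RatFun (cst (Bf * Pm * Pf) * 'X^3
          + cst (Pm * Pf * (Kf + Bf * (mu + nu))) * 'X^2
          + cst (Bf * Im * If + Kf * Pm * Pf * (mu + nu)) * 'X
          + cst (Kf * Im * If))
         (sea_den Kf M B Pm Pf Im If Bf alpha).

Definition sea_h21 : ratfun := RatFun (cst (-1)) 1.

Definition sea_h22 (k22 b22 : R) : ratfun :=
  RatFun 'X (cst b22 * 'X + cst k22).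

End RatFun.

(* Main.v *)
Require Import Defs.
From mathcomp Require Import all_boot all_order all_algebra.
From mathcomp Require Import complex reals.
From mathcomp Require Import ring lra.
Import Order.TTheory GRing.Theory Num.Theory.
Local Open Scope ring_scope.

Lemma key_real (R : realFieldType) (qM b22 E2 E1 E0 F2 F1 Q T : R) :
  0 < qM -> 0 < b22 ->
  T = 1 + (`|E2| + `|E1| + `|E0| + (`|F2| + `|F1|) / b22) / qM ->
  0 <= Q -> b22 * Q <= 1 ->
  (F2 * T^+2 + F1 * T) * Q + (- qM * T^+3 + E2 * T^+2 + E1 * T + E0) < 0.
Proof.
move=> qM0 b0 HT Q0 bQ.
set K := _ + _ + _ + _ in HT.
have K0 : 0 <= K by rewrite /K; apply: addr_ge0; [|apply: divr_ge0]; rewrite ?addr_ge0 ?normr_ge0 ?ltW.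
have T1 : 1 <= T by rewrite HT lerDl divr_ge0 // ltW.
have T0 : 0 <= T by lra.
have TT : T <= T^+2 by rewrite expr2 ler_peMl.
have T2 : 1 <= T^+2 by apply: le_trans TT.
have T20 : 0 <= T^+2 by lra.
have qT : qM * T = qM + K by rewrite HT mulrDr mulr1 mulrCA divff ?mulr1 // gt_eqF.
set A := F2 * T^+2 + F1 * T.
have hA : `|A| <= (`|F2| + `|F1|) * T^+2.
  rewrite /A (le_trans (ler_normD _ _)) // !normrM mulrDl lerD //.
    by rewrite (ger0_norm T0) expr2.
  by rewrite (ger0_norm T0) ler_wpM2l.
have hAQ : A * Q <= (`|F2| + `|F1|) / b22 * T^+2.
  have h1 : A * Q <= `|A| * Q by rewrite ler_wpM2r // ler_norm.
  apply: (le_trans h1).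
  have h2 : `|A| * Q <= `|A| / b22.
    rewrite ler_pdivlMr // -mulrA ler_piMr //.
    by rewrite mulrC.
  apply: (le_trans h2).
  by rewrite mulrAC; apply: ler_wpM2r => //; rewrite invr_ge0 ltW.
have hE : E2 * T^+2 + E1 * T + E0 <= (`|E2| + `|E1| + `|E0|) * T^+2.
  rewrite !mulrDl !lerD //.
  - by rewrite ler_wpM2r ?ler_norm.
  - by rewrite (le_trans (ler_wpM2r T0 (ler_norm E1))) // ler_wpM2l.
  - by rewrite (le_trans (ler_norm E0)) // ler_peMr.
have e3 : qM * T^+3 = (qM + K) * T^+2 by rewrite -qT; ring.
have : A * Q + (E2 * T^+2 + E1 * T + E0) <= K * T^+2.
  by apply: le_trans (lerD hAQ hE) _; rewrite le_eqVlt; apply/orP; left; apply/eqP; rewrite /K; ring.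
have : 0 < qM * T^+2 by rewrite mulr_gt0 // (lt_le_trans _ T2).
lra.
Qed.

Section Cx.
Local Open Scope complex_scope.
Variable R : realType.
Implicit Types a b c d w : R.

Lemma addC a b c d : (Complex a b : R[i]) + Complex c d = Complex (a + c) (b + d).
Proof. reflexivity. Qed.
Lemma mulC a b c d : (Complex a b : R[i]) * Complex c d = Complex (a * c - b * d) (a * d + b * c).
Proof. reflexivity. Qed.
Lemma oppC a b : - (Complex a b : R[i]) = Complex (- a) (- b).
Proof. reflexivity. Qed.
Lemma invC a b : (Complex a b : R[i])^-1 = Complex (a / (a^+2 + b^+2)) (- (b / (a^+2 + b^+2))).
Proof. reflexivity. Qed.
Lemma ReC a b : 'Re (Complex a b : R[i]) = Complex a 0.
Proof. rewrite [Complex a b]complexE /= Re_rect //; by rewrite complex_real. Qed.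
Lemma ler0C a : ((0 : R[i]) <= Complex a 0) = (0 <= a).
Proof. by rewrite lecE /= eqxx. Qed.
Lemma eval_nr (f : ratfun R) z : (rden f).[z] != 0 -> rf_eval f z = (rnum f).[z] / (rden f).[z].
Proof. move=> h; rewrite /rf_eval mupNroot ?expr0 ?divp1 //. Qed.
Lemma nopole (f : ratfun R) z : (rden f).[z] != 0 -> ~ rf_pole f z.
Proof. move=> h [_]; rewrite (mupNroot h). by []. Qed.

Lemma horn4 c4 c3 c2 c1 c0 w :
  (cst c4 * 'X^4 + cst c3 * 'X^3 + cst c2 * 'X^2 + cst c1 * 'X + cst c0).[jw w]
  = Complex (c4 * w^+4 - c2 * w^+2 + c0) (c1 * w - c3 * w^+3).
Proof.
rewrite /cst /jw !hornerD !hornerCM hornerX !hornerXn hornerC !exprS expr0 -[1 : R[i]]/(Complex 1 0) !mulC !addC.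
congr Complex; ring.
Qed.
Lemma horn4' c4 c3 c2 c1 w :
  (cst c4 * 'X^4 + cst c3 * 'X^3 + cst c2 * 'X^2 + cst c1 * 'X).[jw w]
  = Complex (c4 * w^+4 - c2 * w^+2) (c1 * w - c3 * w^+3).
Proof.
rewrite /cst /jw !hornerD !hornerCM hornerX !hornerXn !exprS expr0 -[1 : R[i]]/(Complex 1 0) !mulC !addC.
congr Complex; ring.
Qed.
Lemma horn3 c3 c2 c1 c0 w :
  (cst c3 * 'X^3 + cst c2 * 'X^2 + cst c1 * 'X + cst c0).[jw w]
  = Complex (c0 - c2 * w^+2) (c1 * w - c3 * w^+3).
Proof.
rewrite /cst /jw !hornerD !hornerCM hornerX !hornerXn hornerC !exprS expr0 -[1 : R[i]]/(Complex 1 0) !mulC !addC.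
congr Complex; ring.
Qed.
Lemma horn1 c1 c0 w :
  (cst c1 * 'X + cst c0).[jw w] = Complex c0 (c1 * w).
Proof.
rewrite /cst /jw !hornerD !hornerCM hornerX hornerC !mulC !addC.
congr Complex; ring.
Qed.
End Cx.

Theorem lemma7 (R : realType) (Kf M B Pm Pf k22 b22 Im If Bf alpha : R) :
  0 < Kf -> 0 < M -> 0 < B -> 0 < Pm -> 0 < Pf -> 0 < k22 -> 0 < b22 ->
  0 <= Im -> 0 <= If -> 0 <= Bf -> 0 <= alpha -> alpha <= 1 ->
  let h11 := sea_h11 Kf M B Pm Pf Im If Bf alpha in
  let h12 := sea_h12 Kf M B Pm Pf Im If Bf alpha in
  let h21 := sea_h21 R in
  let h22 := sea_h22 k22 b22 in
  hcond_a [:: h11; h12; h21; h22] ->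
  hcond_b [:: h11; h12; h21; h22] ->
  hcond_ci h11 [:: h11; h12; h21; h22] ->
  absolutely_stable h11 h12 h21 h22 ->
  0 < Bf.
Proof.
move=> Kf0 M0 B0 Pm0 Pf0 k0 b0 Im0 If0; rewrite le_eqVlt => /predU1P [Bf0|//].
move=> a0 a1 h11 h12 h21 h22 _ _ _ [_ _ _ Hcii].
subst Bf.
set mu := Im / Pm. set nu := If / Pf.
set A1 := Kf * Pm * Pf * (mu + nu).
set A2 := Im + Kf * (alpha + Pm * Pf).
set A0 := Kf * Im * If.
set bb := B + Pm.
set q := Pm * Pf * Kf.
set E2 := A0 * M + q * A2 - A1 * bb.
set E1 := - A0 * A2 - q * A0 + A1 ^+ 2.
set E0 := A0 ^+ 2.
set F2 := Kf * (bb * A2 - Im * bb - M * A1).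
set F1 := Kf * (Im * A1 - bb * A0).
set T := 1 + (`|E2| + `|E1| + `|E0| + (`|F2| + `|F1|) / b22) / (q * M).
have qM0 : 0 < q * M by rewrite !mulr_gt0.
have K0 : 0 <= (`|E2| + `|E1| + `|E0| + (`|F2| + `|F1|) / b22) / (q * M).
  by apply: divr_ge0; [apply: addr_ge0; [|apply: divr_ge0]; rewrite ?addr_ge0 ?normr_ge0 ?ltW|apply: ltW].
have T0 : 0 <= T by rewrite /T; lra.
set w := Num.sqrt T.
have wT : w ^+ 2 = T by rewrite sqr_sqrtr.
set Dr := M * w^+4 - A2 * w^+2 + A0.
set Di := A1 * w - bb * w^+3.
have eD : (rden h11).[jw w] = Complex Dr Di.
  rewrite /= /sea_den horn4; congr Complex; rewrite /Dr /Di /A2 /A1 /A0 /bb /mu /nu; ring.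
have eD12 : (rden h12).[jw w] = Complex Dr Di by exact: eD.
have eN11 : (rnum h11).[jw w] = Complex (- (Kf * bb) * w^+2) (Kf * Im * w - Kf * M * w^+3).
  rewrite /= horn4'; congr Complex; rewrite /bb; ring.
have eN12 : (rnum h12).[jw w] = Complex (A0 - q * w^+2) (A1 * w).
  rewrite /= horn3; congr Complex; rewrite /A0 /q /A1 /mu /nu; ring.
have eN22 : (rnum h22).[jw w] = Complex 0 w by rewrite /= hornerX.
have eD22 : (rden h22).[jw w] = Complex k22 (b22 * w) by rewrite /= horn1.
have eN21 : (rnum h21).[jw w] = Complex (-1) 0 by rewrite /= /cst hornerC.
have eD21 : (rden h21).[jw w] = 1 by rewrite /= hornerE.
set Q := w * (b22 * w) / (k22 ^+ 2 + (b22 * w) ^+ 2).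
set S11 := (- (Kf * bb) * w^+2) * Dr + (Kf * Im * w - Kf * M * w^+3) * Di.
set S12 := (A0 - q * w^+2) * Dr + (A1 * w) * Di.
have n22 : 0 < k22 ^+ 2 + (b22 * w) ^+ 2.
  have := sqr_ge0 (b22 * w); have : 0 < k22 ^+ 2 by rewrite exprn_gt0.
  lra.
have Q0 : 0 <= Q.
  apply: divr_ge0; last exact: ltW.
  rewrite mulrCA; apply: mulr_ge0; [exact: ltW | by rewrite -expr2 sqr_ge0].
have bQ : b22 * Q <= 1.
  rewrite /Q mulrA ler_pdivrMr // mul1r; apply: ler_wpDl; first exact: sqr_ge0.
  by rewrite le_eqVlt; apply/orP; left; apply/eqP; ring.
have key : S11 * Q + S12 < 0.
  have := @key_real R (q * M) b22 E2 E1 E0 F2 F1 Q T qM0 b0 erefl Q0 bQ.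
  have -> : S11 = F2 * T^+2 + F1 * T.
    rewrite -wT /S11 /F2 /F1 /Dr /Di; ring.
  have -> : S12 = - (q * M) * T^+3 + E2 * T^+2 + E1 * T + E0.
    rewrite -wT /S12 /E2 /E1 /E0 /Dr /Di; ring.
  by [].
have n2pos : 0 < Dr ^+ 2 + Di ^+ 2.
  rewrite lt_neqAle addr_ge0 ?sqr_ge0 // andbT; apply/eqP => /esym/eqP.
  rewrite paddr_eq0 ?sqr_ge0 // !sqrf_eq0 => /andP[/eqP eDr /eqP eDi].
  by move: key; rewrite /S11 /S12 eDr eDi !mulr0 !addr0 mul0r ltxx.
have Dne : Complex Dr Di != 0.
  apply/eqP => -[eDr eDi]; move: n2pos; rewrite eDr eDi.
  by rewrite expr2 mulr0 add0r ltxx.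
have Haway : away_from_poles [:: h11; h12; h21; h22] w.
  move=> f /= [<-|[<-|[<-|[<-|[]]]]]; apply: nopole.
  - by rewrite eD.
  - by rewrite eD12.
  - by rewrite eD21 oner_neq0.
  - by rewrite eD22; apply/eqP => -[] /eqP; rewrite gt_eqF.
have H := Hcii w Haway; cbv zeta in H.
have hp := (leif_Re_Creal (rf_eval h12 (jw w) * rf_eval h21 (jw w))).1.
have H2 := le_trans H (lerB (lexx _) hp).
move: H2.
rewrite (@eval_nr R h11) ?eD // (@eval_nr R h12) ?eD12 // (@eval_nr R h21) ?eD21 ?oner_neq0 //.
rewrite (@eval_nr R h22) ?eD22; last by apply/eqP => -[] /eqP; rewrite gt_eqF.
rewrite eN11 eN12 eN21 eN22 divr1 !invC !mulC !ReC -[2 : R[i]]/(Complex 2 (0 + 0)) !mulC !oppC !addC lecE /= => /andP[_].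
rewrite [X in 0 <= X -> _](_ : _ = 2 * (S11 * Q + S12) / (Dr ^+ 2 + Di ^+ 2)); last first.
  by rewrite /S11 /S12 /Q; ring.
move=> H3; have := mulr_ge0 H3 (ltW n2pos); rewrite divfK ?gt_eqF //.
lra.
Qed.
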